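(* Let $k=2j$ with $j\ge1$, let $p\in\mathbb{S}^n$, $R\in(0,\pi/2)$, $B_R=\{q:\mathbf{d}_p(q)\le R\}$, and let $x,y\in\partial B_R$ with $x\neq y$; set $r=\mathbf{d}_y(x)$. Then \[\tan R\,\langle\Psi_y,\nabla\mathbf{d}_p\rangle\big|_x=-\sum_{i=0}^{j-1}a_{i+1}(1-\cos r)^{-i},\] where $a_1=\frac{1}{2j-1}$ and $a_{i+1}=\frac{2(j-i)}{2j-(i+1)}a_i$ for $i=1,\dots,j-1$.
   Context: $\mathbb{S}^n$ is the unit round sphere with Levi-Civita connection $\nabla$; $\mathbf{d}_q$ is geodesic distance from $q$. $I_k(r)=\int_0^r\sin^{k-1}s\,ds$, $\varphi(t)=I_k(t)\sin^{1-k}t$ for $t\in(0,\pi)$, $\varphi(0)=0$, $\Phi_q=(\varphi\circ\mathbf{d}_q)\nabla\mathbf{d}_q$ on $\mathbb{S}^n\setminus\{-q\}$, and $\Psi_q:=\Phi_{-q}$ on $\mathbb{S}^n\setminus\{q\}$. *)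

(* Defs.v *)
(* S^n is realised as the unit sphere in R^(n+1),
   points are row vectors 'rV[R]_(n.+1) with the Euclidean inner product. *)
From HB Require Import structures.
From mathcomp Require Import all_boot all_order all_algebra.
From mathcomp Require Import all_classical all_reals all_analysis.
Set Implicit Arguments. Unset Strict Implicit. Unset Printing Implicit Defensive.
Import Order.TTheory GRing.Theory Num.Theory.
Import numFieldNormedType.Exports.
Local Open Scope classical_set_scope.
Local Open Scope ring_scope.

Section Defs.
Variables (R : realType) (n : nat).
Notation V := 'rV[R]_(n.+1).

Definition dotv (u v : V) : R := \sum_(i < n.+1) u ord0 i * v ord0 i.

Definition on_sphere (x : V) : Prop := dotv x x = 1.

Definition gdist (q : V) (x : V) : R := acos (dotv q x).

(* Riemannian gradient of f : S^n -> R at x: the tangent vector g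
   (g . x = 0) such that for every unit tangent vector w the derivative of f
   along the unit-speed geodesic t |-> cos t x + sin t w at t = 0 is g . w. *)
Definition is_sgrad (f : V -> R) (x g : V) : Prop :=
  dotv g x = 0 /\
  forall w : V, dotv w x = 0 -> dotv w w = 1 ->
    is_derive (0 : R) (1 : R) (fun t : R => f (cos t *: x + sin t *: w)) (dotv g w).

End Defs.

Definition Ik (R : realType) (k : nat) (r : R) : R :=
  (\int[lebesgue_measure]_(s in `[0, r]) (sin s ^+ k.-1))%R.

Definition phik (R : realType) (k : nat) (t : R) : R :=
  if t == 0 then 0 else Ik k t / sin t ^+ k.-1.

(* acoef j i = a_(i+1):  a_1 = 1/(2j-1),  a_(i+1) = 2(j-i)/(2j-(i+1)) a_i *)
Fixpoint acoef (R : realType) (j : nat) (i : nat) : R :=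
  match i with
  | 0 => 1 / (2 * j%:R - 1)
  | i'.+1 => (2 * (j%:R - i%:R)) / (2 * j%:R - (i%:R + 1)) * acoef R j i'
  end.

(* Main.v *)
Require Import Defs.
From HB Require Import structures.
From mathcomp Require Import all_boot all_order all_algebra.
From mathcomp Require Import all_classical all_reals all_analysis.
From mathcomp Require Import ring lra zify.
Import Order.TTheory GRing.Theory Num.Theory.
Import numFieldNormedType.Exports.
Local Open Scope ring_scope.

Section Dot.
Context {R : realType} {n : nat}.
Notation V := 'rV[R]_(n.+1).
Implicit Types u v w : V.

Lemma dotvC u v : dotv u v = dotv v u.
Proof. by rewrite /dotv; apply: eq_bigr => i _; rewrite mulrC. Qed.

Lemma dotvDl u v w : dotv (u + v) w = dotv u w + dotv v w.
Proof. by rewrite /dotv -big_split; apply: eq_bigr => i _; rewrite !mxE mulrDl. Qed.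

Lemma dotvZl (a : R) u w : dotv (a *: u) w = a * dotv u w.
Proof. by rewrite /dotv mulr_sumr; apply: eq_bigr => i _; rewrite !mxE mulrA. Qed.

Lemma dotvNl u w : dotv (- u) w = - dotv u w.
Proof. by rewrite -scaleN1r dotvZl mulN1r. Qed.

Lemma dotvBl u v w : dotv (u - v) w = dotv u w - dotv v w.
Proof. by rewrite dotvDl dotvNl. Qed.

Lemma dotvDr u v w : dotv w (u + v) = dotv w u + dotv w v.
Proof. by rewrite dotvC dotvDl !(dotvC w). Qed.

Lemma dotvZr (a : R) u w : dotv w (a *: u) = a * dotv w u.
Proof. by rewrite dotvC dotvZl dotvC. Qed.

Lemma dotvNr u w : dotv w (- u) = - dotv w u.
Proof. by rewrite dotvC dotvNl dotvC. Qed.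

Lemma dotvBr u v w : dotv w (u - v) = dotv w u - dotv w v.
Proof. by rewrite dotvDr dotvNr. Qed.

Lemma dotv_ge0 u : 0 <= dotv u u.
Proof. by rewrite /dotv; apply: sumr_ge0 => i _; rewrite -expr2 sqr_ge0. Qed.

Lemma dotv_eq0 u : dotv u u = 0 -> u = 0.
Proof.
move=> /eqP; rewrite /dotv psumr_eq0; last by move=> i _; rewrite -expr2 sqr_ge0.
move=> /allP H; apply/rowP => i; rewrite mxE.
have := H i (mem_index_enum _); rewrite /= mulf_eq0 orbb => /eqP.
by rewrite [ord0]ord1.
Qed.

End Dot.
Section Der.
Context {R : realType}.
Implicit Types (f g : R -> R) (x df dg : R).

Lemma is_derive_comp1 {f g x df dg} :
  is_derive x 1 f df -> is_derive (f x) 1 g dg ->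
  is_derive x 1 (fun t => g (f t)) (dg * df).
Proof.
move=> Hf Hg.
have df1 : derivable f x 1 by case: Hf.
have dg1 : derivable g (f x) 1 by case: Hg.
apply: DeriveDef.
  apply/derivable1_diffP; apply: (@differentiable_comp _ _ _ _ f g).
    exact/derivable1_diffP.
  exact/derivable1_diffP.
rewrite -derive1E.
have := derive1_comp df1 dg1; rewrite /comp => ->.
by rewrite !derive1E !derive_val.
Qed.

Lemma is_derive_mul1 {f g x df dg} :
  is_derive x 1 f df -> is_derive x 1 g dg ->
  is_derive x 1 (fun t => f t * g t) (f x * dg + g x * df).
Proof. by move=> Hf Hg; have := is_deriveM Hf Hg. Qed.

Lemma is_derive_exp1 {f x df} m :
  is_derive x 1 f df ->
  is_derive x 1 (fun t => f t ^+ m) (m%:R * f x ^+ m.-1 * df).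
Proof.
move=> Hf; have := is_deriveX m Hf.
rewrite (_ : f ^+ m = (fun t => f t ^+ m)); last by apply/funext => t; rewrite exprfctE.
by [].
Qed.

Lemma is_derive_add1 {f g x df dg} :
  is_derive x 1 f df -> is_derive x 1 g dg ->
  is_derive x 1 (fun t => f t + g t) (df + dg).
Proof. by move=> Hf Hg; have := is_deriveD Hf Hg. Qed.

Lemma is_derive_cst1 (a : R) x : is_derive x 1 (fun _ => a) 0.
Proof. exact: is_derive_cst. Qed.

Lemma is_derive_scal1 {f} (a : R) {x df} :
  is_derive x 1 f df -> is_derive x 1 (fun t => a * f t) (a * df).
Proof. by move=> Hf; have := is_deriveZ a Hf. Qed.

Lemma is_derive_sum1 m (h : 'I_m -> R -> R) x (dh : 'I_m -> R) :
  (forall i, is_derive x 1 (h i) (dh i)) ->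
  is_derive x 1 (fun t => \sum_(i < m) h i t) (\sum_(i < m) dh i).
Proof.
move=> H; have := is_derive_sum H.
by rewrite (_ : \sum_(i < m) h i = (fun t => \sum_(i < m) h i t)) // funeqE => t; rewrite fct_sumE.
Qed.

Lemma is_derive_opp1 {f x df} :
  is_derive x 1 f df -> is_derive x 1 (fun t => - f t) (- df).
Proof. by move=> Hf; have := is_deriveN Hf. Qed.

End Der.
Section Grad.
Context {R : realType} {n : nat}.
Notation V := 'rV[R]_(n.+1).
Implicit Types u v w q x : V.

Definition sg q x : V := (- (sin (acos (dotv q x)))^-1) *: (q - dotv q x *: x).

Lemma sg_ok q x : on_sphere x -> -1 < dotv q x < 1 -> is_sgrad (gdist q) x (sg q x).
Proof.
move=> Hx /andP[a1 a2]; set a := dotv q x.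
split.
  by rewrite /sg dotvZl dotvBl dotvZl Hx mulr1 subrr mulr0.
move=> w wx ww; set b := dotv q w.
have -> : (fun t => gdist q (cos t *: x + sin t *: w)) = (fun t => acos (cos t * a + sin t * b)).
  by apply/funext => t; rewrite /gdist dotvDr !dotvZr.
have Hf : is_derive (0:R) 1 (fun t : R => cos t * a + sin t * b) b.
  apply: is_derive_eq.
  rewrite sin0 cos0 !(scaler0, oppr0, add0r, addr0) /=.
  by rewrite -[b%:A]/(b * 1) mulr1.
  idtac.
have Hg : is_derive (cos 0 * a + sin 0 * b) 1 acos (- (Num.sqrt (1 - a ^+ 2))^-1).
  by rewrite cos0 sin0 mul1r mul0r addr0; apply: is_derive1_acos; rewrite a1 a2.
apply: (is_derive_eq (@is_derive_comp1 R _ _ _ _ _ Hf Hg)).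
rewrite /sg dotvZl dotvBl dotvZl -/b (dotvC x w) wx mulr0 subr0.
by rewrite sin_acos // ltW ?a1 // ltW.
Qed.

Lemma sg_unique f x G G' : on_sphere x -> is_sgrad f x G -> is_sgrad f x G' -> G = G'.
Proof.
move=> Hx [G1 G2] [G1' G2'].
have Ht w : dotv w x = 0 -> dotv w w = 1 -> dotv (G - G') w = 0.
  move=> wx ww; rewrite dotvBl.
  have h1 := G2 w wx ww; have h2 := G2' w wx ww.
  by rewrite -(@derive_val _ _ _ _ _ _ _ h1) -(@derive_val _ _ _ _ _ _ _ h2) subrr.
set D := G - G'.
have Dx : dotv D x = 0 by rewrite dotvBl G1 G1' subrr.
suff : dotv D D = 0 by move/dotv_eq0/eqP; rewrite subr_eq0 => /eqP.
have [//|DD] := eqVneq (dotv D D) 0; exfalso.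
have Dpos : 0 < dotv D D by rewrite lt_neqAle eq_sym DD dotv_ge0.
set s := Num.sqrt (dotv D D).
have s0 : 0 < s by rewrite sqrtr_gt0.
have ss : s ^+ 2 = dotv D D by rewrite sqr_sqrtr // ltW.
have := Ht (s^-1 *: D).
rewrite !dotvZl !dotvZr Dx mulr0 => /(_ erefl).
rewrite -ss.
have sn0 : s != 0 by rewrite gt_eqF.
rewrite mulrA -expr2 exprVn mulVf ?expf_neq0 // => /(_ erefl).
move/eqP; rewrite mulf_eq0 invr_eq0 (negbTE sn0) /= expf_eq0 /= (negbTE sn0) //.
Qed.

End Grad.
Arguments acoef : simpl never.

Section Integ.
Context {R : realType}.

Definition Fint (j : nat) (s : R) : R :=
  \sum_(i < j) acoef R j i * ((1 - cos s) ^+ j * (1 + cos s) ^+ (j - 1 - i)).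

Lemma Fterm_alg (j m : nat) (c d : R) : (0 < j)%N ->
  (1-c)^+j * (m%:R * (1+c)^+m.-1 * - d) + (1+c)^+m * (j%:R * (1-c)^+j.-1 * d) =
  d * (1-c)^+j.-1 * (j%:R * (1+c)^+m - m%:R * (1-c) * (1+c)^+m.-1).
Proof.
case: j => [//|j] _; case: m => [|m] /=; rewrite ?exprS ?expr0.
- move: ((1-c)^+j) => Q; ring.
- move: ((1+c)^+m) ((1-c)^+j) => P Q; ring.
Qed.

Lemma Fterm_derive (j m : nat) (a s : R) : (0 < j)%N ->
  is_derive s 1 (fun t => a * ((1 - cos t) ^+ j * (1 + cos t) ^+ m)) 
    (a * (sin s * (1 - cos s) ^+ j.-1 * (j%:R * (1 + cos s) ^+ m - m%:R * (1 - cos s) * (1 + cos s) ^+ m.-1))).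
Proof.
move=> j0.
have Hc : is_derive (s:R) 1 (@cos R) (- sin s) by exact: is_derive_cos.
have H1 : is_derive s 1 (fun t => 1 - cos t) (sin s).
  apply: (is_derive_eq (@is_derive_add1 R (fun _ => 1) (fun t => - cos t) s 0 (- - sin s) (is_derive_cst1 _ _) (is_derive_opp1 Hc))).
  by rewrite add0r opprK.
have H2 : is_derive s 1 (fun t => 1 + cos t) (- sin s).
  apply: (is_derive_eq (@is_derive_add1 R (fun _ => 1) cos s 0 (- sin s) (is_derive_cst1 _ _) Hc)).
  by rewrite add0r.
have H3 := is_derive_exp1 j H1.
have H4 := is_derive_exp1 m H2.
have H5 := is_derive_mul1 H3 H4.
have H6 := is_derive_scal1 a H5.
apply: (is_derive_eq H6); congr (a * _).
exact: Fterm_alg j0.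
Qed.

Lemma acoef_0 j : acoef R j 0 = 1 / (2 * j%:R - 1). Proof. by []. Qed.
Lemma acoef_S j k : acoef R j k.+1 =
  2 * (j%:R - k.+1%:R) / (2 * j%:R - (k.+1%:R + 1)) * acoef R j k.
Proof. by []. Qed.

Lemma acoef0 (j : nat) : (0 < j)%N -> (2 * j%:R - 1) * acoef R j 0 = 1.
Proof.
move=> j0; have h : (1 <= j%:R :> R) by rewrite ler1n.
have hne : (2 * j%:R - 1 : R) != 0 by apply/lt0r_neq0; lra.
by rewrite acoef_0 mul1r mulfV.
Qed.

Lemma acoefS (j k : nat) : (k.+1 < j)%N ->
  (2 * j%:R - 1 - k.+1%:R) * acoef R j k.+1 = 2 * (j%:R - k.+1%:R) * acoef R j k.
Proof.
move=> kj; have h : ((k.+2)%:R <= j%:R :> R) by rewrite ler_nat.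
have h2 : (k.+2)%:R = k.+1%:R + 1 :> R by rewrite -natr1.
have hne : (2 * j%:R - (k.+1%:R + 1) : R) != 0.
  apply/lt0r_neq0; have : (0 <= k.+1%:R :> R) by []. lra.
rewrite acoef_S.
have -> : 2 * j%:R - 1 - k.+1%:R = 2 * j%:R - (k.+1%:R + 1) :> R by ring.
move: hne; set D := 2 * j%:R - _; set N := 2 * (_ - _) => hne.
by rewrite mulrA [D * _]mulrCA mulfV // mulr1.
Qed.

Lemma Tsplit (j i m : nat) (w : R) : (m + i + 1 = j)%N ->
  j%:R * w ^+ m - m%:R * (2 - w) * w ^+ m.-1 =
  (2 * j%:R - 1 - i%:R) * w ^+ m - 2 * m%:R * w ^+ m.-1.
Proof.
move=> hm; have hj : j%:R = m%:R + i%:R + 1 :> R by rewrite -hm natrD natrD.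
rewrite hj; case: m {hm hj} => [|m] /=.
- rewrite expr0; ring.
- rewrite exprS; move: (w ^+ m) => P; ring.
Qed.


Lemma tele (j : nat) (w : R) : (0 < j)%N ->
  \sum_(i < j) acoef R j i * (j%:R * w ^+ (j-1-i) - (j-1-i)%:R * (2 - w) * w ^+ (j-1-i).-1)
  = w ^+ (j-1).
Proof.
move=> j0.
have key : forall k, (k < j)%N ->
  \sum_(i < k.+1) acoef R j i * (j%:R * w ^+ (j-1-i) - (j-1-i)%:R * (2 - w) * w ^+ (j-1-i).-1)
  = w ^+ (j-1) - 2 * (j-1-k)%:R * acoef R j k * w ^+ (j-1-k).-1.
  elim=> [|k IH] kj.
  - rewrite big_ord1 /=.
    rewrite (@Tsplit j 0 (j-1-0) w); last by lia.
    rewrite subn0 subr0.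
    have h := acoef0 _ j0; move: h; set a := acoef R j 0 => h.
    move: (w ^+ (j-1)) (w ^+ (j-1).-1) => P Q.
    transitivity ((2 * j%:R - 1) * a * P - 2 * (j-1)%:R * a * Q); first ring.
    by rewrite h mul1r.
  - rewrite big_ord_recr IH; last by apply: ltnW.
    rewrite (_ : nat_of_ord (@ord_max k.+1) = k.+1) //.
    rewrite (@Tsplit j k.+1 (j-1-k.+1) w); last by lia.
    have -> : ((j-1-k).-1 = j-1-k.+1)%N by lia.
    have hm : (j-1-k)%:R = j%:R - k.+1%:R :> R.
      have : ((j-1-k) + k.+1 = j)%N by lia.
      by move=> /(congr1 (fun n => n%:R : R)); rewrite natrD => <-; rewrite addrK.
    rewrite -[X in X = _]/(_ + _) hm.
    have hS := acoefS _ _ kj.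
    move: hS; set A1 := acoef R j k.+1; set A0 := acoef R j k => hS.
    move: (w ^+ (j-1)) (w ^+ (j-1-k.+1)) (w ^+ (j-1-k.+1).-1) => W P Q.
    transitivity (W - 2 * (j%:R - k.+1%:R) * A0 * P + ((2 * j%:R - 1 - k.+1%:R) * A1) * P
       - 2 * (j - 1 - k.+1)%:R * A1 * Q); first ring.
    rewrite hS; ring.
case: j j0 key => // j' _ key.
rewrite key // (_ : (j'.+1 - 1 - j' = 0)%N); last by lia.
by rewrite mulr0 mul0r mul0r subr0.
Qed.


Lemma sin_pow_odd (j : nat) (s : R) : (0 < j)%N ->
  sin s ^+ (2 * j).-1 = sin s * (1 - cos s) ^+ j.-1 * (1 + cos s) ^+ (j - 1).
Proof.
move=> j0; rewrite subn1 -mulrA -exprMn.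
have -> : (1 - cos s) * (1 + cos s) = sin s ^+ 2 by rewrite sin2cos2; ring.
rewrite -exprM -exprS; congr (_ ^+ _); lia.
Qed.

Lemma Fint_derive (j : nat) (s : R) : (0 < j)%N ->
  is_derive s 1 (Fint j) (sin s ^+ (2 * j).-1).
Proof.
move=> j0.
have H := @is_derive_sum1 R j
  (fun i t => acoef R j i * ((1 - cos t) ^+ j * (1 + cos t) ^+ (j - 1 - i))) s
  (fun i => acoef R j i * (sin s * (1 - cos s) ^+ j.-1 * (j%:R * (1 + cos s) ^+ (j-1-i)
     - (j-1-i)%:R * (1 - cos s) * (1 + cos s) ^+ (j-1-i).-1)))
  (fun i => Fterm_derive _ _ _ _ j0).
apply: (is_derive_eq H).
rewrite sin_pow_odd // -(tele j (1 + cos s) j0) mulr_sumr; apply: eq_bigr => i _.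
have -> : 1 - cos s = 2 - (1 + cos s) :> R by ring.
by rewrite mulrCA.
Qed.

Lemma cont_of_derivable (f : R -> R) : (forall x, derivable f x 1) -> continuous f.
Proof.
move=> H x; apply: differentiable_continuous; exact/derivable1_diffP.
Qed.

Lemma Fint0 (j : nat) : (0 < j)%N -> Fint j 0 = 0.
Proof.
move=> j0; rewrite /Fint big1 // => i _.
by rewrite cos0 subrr expr0n eqn0Ngt j0 /= mul0r mulr0.
Qed.

Lemma Ik_Fint (j : nat) (T : R) : (0 < j)%N -> 0 < T -> Ik (2 * j) T = Fint j T.
Proof.
move=> j0 T0.
have dF x : derivable (Fint j) x 1 by case: (Fint_derive j x j0).
have df x : derivable (fun s : R => sin s ^+ (2 * j).-1) x 1.
  by apply: ex_derive; apply: is_derive_exp1; exact: is_derive_sin.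
have cF := cont_of_derivable _ dF.
have cf := cont_of_derivable _ df.
rewrite /Ik /Rintegral (@continuous_FTC2 R (fun s => sin s ^+ (2 * j).-1) (Fint j) 0 T T0).
- by rewrite Fint0 // -EFinB subr0.
- by apply: continuous_subspaceT => x; apply: cf.
- split.
  + by move=> x _; apply: dF.
  + by apply: cvg_at_right_filter; apply: cF.
  + by apply: cvg_at_left_filter; apply: cF.
- move=> x _; rewrite derive1E.
  by have [_ ->] := Fint_derive j x j0.
Qed.

End Integ.

Lemma dot_bound {R : realType} {n : nat} {u v : 'rV[R]_(n.+1)} :
  on_sphere u -> on_sphere v -> -1 <= dotv u v <= 1.
Proof.
move=> hu hv.
have h1 := dotv_ge0 (u - v); have h2 := dotv_ge0 (u + v).
rewrite !(dotvBl, dotvBr, dotvDl, dotvDr) hu hv (dotvC v u) in h1 h2.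
apply/andP; split; lra.
Qed.

Lemma natlem (j : nat) (i : 'I_j) : j = ((j - 1 - i).+1 + i)%N.
Proof. have := ltn_ord i; lia. Qed.

Theorem lemma2p8 (R : realType) (n j : nat) (p x y : 'rV[R]_(n.+1)) (Rad : R) :
  (1 <= j)%N ->
  on_sphere p -> on_sphere x -> on_sphere y ->
  0 < Rad -> Rad < pi / 2 ->
  gdist p x = Rad -> gdist p y = Rad -> x != y ->
  (exists G g, is_sgrad (gdist (- y)) x G /\ is_sgrad (gdist p) x g) /\
  (forall G g : 'rV[R]_(n.+1),
     is_sgrad (gdist (- y)) x G -> is_sgrad (gdist p) x g ->
     tan Rad * dotv (phik (2 * j)%N (gdist (- y) x) *: G) g =
     - \sum_(i < j) acoef R j i * (1 - cos (gdist y x)) ^- i).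
Proof.
move=> j1 Hp Hx Hy R0 Rpi dpx dpy xy.
have pi0 := pi_gt0 R.
have bpx := dot_bound Hp Hx; have bpy := dot_bound Hp Hy; have byx := dot_bound Hy Hx.
set a := dotv p x.
have ca : cos Rad = a by rewrite -dpx /gdist acosK // in_itv /=.
have cay : cos Rad = dotv p y by rewrite -dpy /gdist acosK // in_itv /=.
have cR : 0 < cos Rad by apply: cos_gt0_pihalf; apply/andP; split; lra.
have sR : 0 < sin Rad by apply: sin_gt0_pihalf; apply/andP; split; lra.
have a1 : a < 1.
  rewrite lt_neqAle; case/andP: bpx => _ ->; rewrite andbT.
  apply/eqP => a1; move: dpx; rewrite /gdist -/a a1 acos1 => H; lra.
set b := dotv y x.
have b1 : b < 1.
  rewrite lt_neqAle; case/andP: byx => _ ->; rewrite andbT.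
  apply/eqP => b1; move/eqP: xy; apply.
  have : dotv (x - y) (x - y) = 0.
    rewrite !(dotvBl, dotvBr) Hx Hy (dotvC x y) -/b b1; ring.
  by move/dotv_eq0/eqP; rewrite subr_eq0 => /eqP.
have bm1 : -1 < b.
  rewrite lt_neqAle; case/andP: byx => -> _; rewrite andbT.
  apply/eqP => bN.
  have : dotv (x + y) (x + y) = 0.
    rewrite !(dotvDl, dotvDr) Hx Hy (dotvC x y) -/b -bN; ring.
  move/dotv_eq0 => /eqP; rewrite addr_eq0 => /eqP xy'.
  have : a = - dotv p y by rewrite /a xy' dotvNr.
  lra.
have hyx : -1 < dotv (- y) x < 1 by rewrite dotvNl -/b; apply/andP; split; lra.
have hpx : -1 < dotv p x < 1 by rewrite -/a; apply/andP; split; lra.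
split.
  exists (sg (- y) x), (sg p x); split; exact: sg_ok.
move=> G g HG Hg.
rewrite (sg_unique _ _ _ _ Hx HG (sg_ok _ _ Hx hyx)) (sg_unique _ _ _ _ Hx Hg (sg_ok _ _ Hx hpx)).
set r := acos b.
have cr : cos r = b by rewrite /r acosK // in_itv /= ltW // ltW.
have r0 : 0 < r by apply: acos_gt0; rewrite b1 ltW.
have rpi : r < pi by apply: acos_ltpi; rewrite bm1 ltW.
have sr0 : 0 < sin r by apply: sin_gt0_pi; rewrite r0 rpi.
have spr : sin (pi - r) = sin r by rewrite sinB sinpi cospi; ring.
have cpr : cos (pi - r) = - b by rewrite cosB sinpi cospi cr; ring.
have apr : acos (- b) = pi - r by rewrite acosN // ltW // ltW.
have pr0 : (pi - r == 0) = false by apply/negbTE; rewrite subr_eq0 gt_eqF.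
rewrite /gdist dotvNl -/b apr -/r cr /phik pr0 Ik_Fint //; last by rewrite subr_gt0.
rewrite /sg dotvNl -/b apr spr -/a.
move: dpx; rewrite /gdist -/a => ->.
rewrite dotvZl !dotvZl !dotvZr.
have -> : dotv (- y - - b *: x) (p - a *: x) = - a * (1 - b).
  rewrite !(dotvBl, dotvBr, dotvNl, dotvZl, dotvZr) Hx (dotvC y p) -cay ca (dotvC x p) -/a -/b.
  ring.
have sr2 : sin r ^+ 2 = (1 - b) * (1 + b) by rewrite sin2cos2 cr; ring.
set N := (2 * j).-1.
have s2j : sin r ^+ N * sin r = (1 - b) ^+ j * (1 + b) ^+ j.
  rewrite -exprSr (_ : N.+1 = 2 * j)%N; last by rewrite /N prednK // muln_gt0.
  by rewrite exprM sr2 exprMn.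
have sne : sin r != 0 by rewrite gt_eqF.
have sRne : sin Rad != 0 by rewrite gt_eqF.
have ane : a != 0 by rewrite -ca gt_eqF.
have sNne : sin r ^+ N != 0 by rewrite expf_neq0.
rewrite /tan ca.
transitivity (- Fint j (pi - r) * ((1 - b) / (sin r ^+ N * sin r))).
  move: (Fint j (pi - r)) (sin r ^+ N) sNne => S SN SNne.
  field.
  by rewrite sne SNne sRne ane.
rewrite s2j /Fint cpr mulNr mulr_suml; congr (- _); apply: eq_bigr => i _.
have b1ne : 1 - b != 0 by rewrite subr_eq0 eq_sym lt_eqF.
have b2ne : 1 + b != 0 by apply/lt0r_neq0; lra.
have -> : (1 - b) ^+ j = (1 - b) ^+ (j - 1 - i) * (1 - b) * (1 - b) ^+ i.
  rewrite -exprSr -exprD; congr (_ ^+ _); exact: natlem.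
rewrite opprK (_ : 1 + - b = 1 - b) //.
have h1 : (1 - b) ^+ (j - 1 - i) != 0 by rewrite expf_neq0.
have h2 : (1 - b) ^+ i != 0 by rewrite expf_neq0.
have h3 : (1 + b) ^+ j != 0 by rewrite expf_neq0.
move: ((1 - b) ^+ (j - 1 - i)) ((1 - b) ^+ i) ((1 + b) ^+ j) h1 h2 h3 => P Q U h1 h2 h3.
field.
by rewrite h1 h2 h3 b1ne.
Qed.
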